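(* Let $G$ be a finite abelian group, $\mathcal M=(M,\preceq)$ a $\hat G$-linear monoid with partial order satisfying conditions (1)–(3) below, and $k$ a field. Then the extension of scalars functor $-\otimes k:\mathrm{Rep}(M,\hat G)\to k[M]\text{-}\mathrm{mod}$ restricts to a functor $-\otimes k:\mathrm{Rep}(\mathcal M,\hat G)\to k[\mathcal M]\text{-}\mathrm{mod}$.
   Context: $\hat G=G\sqcup\{0\}$ with $0$ absorbing. $\mathrm{Vect}_{\hat G}$: objects are finite pointed sets with an action of $\hat G$ ($0v=0$, $g0=0$) such that $G$ acts freely on nonzero elements; morphisms $f$ satisfy $f(0)=0$, $f(gv)=gf(v)$, $f(v_1)=f(v_2)\neq0\Rightarrow Gv_1=Gv_2$. A $\hat G$-linear monoid is a finite monoid $M$ with absorbing element $0_M$ containing $G$ as a subgroup of units commuting with all of $M$, with $G$ acting freely by translation on $M\setminus\{0_M\}$. $\mathrm{Rep}(M,\hat G)$: objects $V$ of $\mathrm{Vect}_{\hat G}$ with an action $a\mapsto V(a)$ of $M$ by morphisms of $\mathrm{Vect}_{\hat G}$, $0_M$ acting as zero and $g\in G$ as scalar $g$. On $\mathrm{End}_{\hat G}(V)$: $A\le B$ iff for all $x$, $Ax\neq0\Rightarrow Bx=Ax$. $\preceq$ is a partial order on $M$ with: (1) $0_M$ the unique minimal element; (2) whenever $\bigvee_{a\in I}a$ exists, $x(\bigvee a)=\bigvee xa$ and $(\bigvee a)x=\bigvee ax$ for all $x$; (3) the same for meets. $\mathrm{Rep}(\mathcal M,\hat G)$ is the full subcategory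 of $V\in\mathrm{Rep}(M,\hat G)$ such that whenever $\bigvee_{a\in I}a$ exists in $M$, $\bigvee_{a\in I}V(a)$ exists in $\mathrm{End}_{\hat G}(V)$ and equals $V(\bigvee_{a\in I}a)$. A complete system of orthogonal idempotents is a finite set $E=\{e_1,\dots,e_m\}\subseteq M$ with $e_ie_j=\delta_{ij}e_j$ and $1=\bigvee_i e_i$; $\mathcal C(M)$ is the set of these. $k[M]$ is the monoid algebra and $k[\mathcal M]=k[M]/(a-\sum_{e\in E}ae,\ a-\sum_{e\in E}ea\mid a\in M, E\in\mathcal C(M))$. For $V\in\mathrm{Rep}(M,\hat G)$, $V\otimes k$ is the $k$-vector space with basis $V\setminus\{0\}$, on which $a\in M$ acts by $v\mapsto av$ if $av\neq0$ and $v\mapsto0$ otherwise, and morphisms are extended linearly in the same way. *)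

(* Defs.v *)
From HB Require Import structures.
From mathcomp Require Import all_boot all_order all_fingroup all_algebra.
Set Implicit Arguments. Unset Strict Implicit. Unset Printing Implicit Defensive.
Import GRing.Theory.
Local Open Scope ring_scope.

Definition hatG_linear_monoid (gT : finGroupType) (M : finType)
  (mul : M -> M -> M) (one zero : M) (iota : gT -> M) : Prop :=
  [/\ [/\ associative mul, left_id one mul & right_id one mul],
      left_zero zero mul /\ right_zero zero mul,
      [/\ iota 1%g = one, (forall g h, iota (g * h)%g = mul (iota g) (iota h)) & injective iota],
      (forall g m, mul (iota g) m = mul m (iota g))
    & (forall g m, m != zero -> mul (iota g) m = m -> g = 1%g)].

Definition is_join (T : finType) (le : rel T) (I : {set T}) (j : T) : Prop :=
  (forall a, a \in I -> le a j) /\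
  (forall u, (forall a, a \in I -> le a u) -> le j u).

Definition is_meet (T : finType) (le : rel T) (I : {set T}) (j : T) : Prop :=
  (forall a, a \in I -> le j a) /\
  (forall u, (forall a, a \in I -> le u a) -> le u j).

Definition monoid_order (M : finType) (mul : M -> M -> M) (zero : M)
  (le : rel M) : Prop :=
  [/\ [/\ reflexive le, antisymmetric le & transitive le],
      (forall x, le x zero -> x = zero) /\
      (forall m, (forall x, le x m -> x = m) -> m = zero),
      (forall (I : {set M}) j, is_join le I j -> forall x,
          is_join le [set mul x a | a in I] (mul x j) /\
          is_join le [set mul a x | a in I] (mul j x))
    &
      (forall (I : {set M}) j, is_meet le I j -> forall x,
          is_meet le [set mul x a | a in I] (mul x j) /\
          is_meet le [set mul a x | a in I] (mul j x))].

(* An object of Vect_{\hat G}: finite pointed set (V, z) with \hat G-action,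
   g acting by gact g and 0 acting as the constant z. *)
Definition vectG_obj (gT : finGroupType) (V : finType) (z : V)
  (gact : gT -> V -> V) : Prop :=
  [/\ forall v, gact 1%g v = v,
      forall g h v, gact (g * h)%g v = gact g (gact h v),
      forall g, gact g z = z
    & forall g v, v != z -> gact g v = v -> g = 1%g].

Definition vectG_mor (gT : finGroupType) (V W : finType) (zV : V) (zW : W)
  (gV : gT -> V -> V) (gW : gT -> W -> W) (f : V -> W) : Prop :=
  [/\ f zV = zW,
      forall g v, f (gV g v) = gW g (f v)
    & forall v1 v2, f v1 = f v2 -> f v1 != zW -> exists g, v1 = gV g v2].

Definition endle (V : finType) (z : V) (A B : V -> V) : Prop :=
  forall x, A x != z -> B x = A x.

Definition rep_obj (gT : finGroupType) (M : finType) (mul : M -> M -> M)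
  (one zero : M) (iota : gT -> M) (V : finType) (z : V) (act : M -> V -> V)
  : Prop :=
  [/\ vectG_obj z (fun g => act (iota g)),
      forall v, act one v = v,
      forall a b v, act (mul a b) v = act a (act b v),
      forall v, act zero v = z
    & forall a, vectG_mor z z (fun g => act (iota g)) (fun g => act (iota g)) (act a)].

Definition rep_mor (gT : finGroupType) (M : finType) (iota : gT -> M)
  (V W : finType) (zV : V) (zW : W) (actV : M -> V -> V) (actW : M -> W -> W)
  (f : V -> W) : Prop :=
  vectG_mor zV zW (fun g => actV (iota g)) (fun g => actW (iota g)) f /\
  forall a v, f (actV a v) = actW a (f v).

Definition repM_obj (gT : finGroupType) (M : finType) (mul : M -> M -> M)
  (one zero : M) (iota : gT -> M) (le : rel M)
  (V : finType) (z : V) (act : M -> V -> V) : Prop :=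
  rep_obj mul one zero iota z act /\
  forall (I : {set M}) j, is_join le I j ->
    let isEnd := vectG_mor z z (fun g => act (iota g)) (fun g => act (iota g)) in
    [/\ isEnd (act j),
        forall a, a \in I -> endle z (act a) (act j)
      & forall B, isEnd B -> (forall a, a \in I -> endle z (act a) B) ->
          endle z (act j) B].

Definition complete_orth_idem (M : finType) (mul : M -> M -> M)
  (one zero : M) (le : rel M) (E : {set M}) : Prop :=
  (forall e e', e \in E -> e' \in E -> mul e e' = if e == e' then e' else zero)
  /\ is_join le E one.

(* V (x) k: the k-vector space with basis V \ {z}, i.e. functions on the
   nonzero elements. *)
Notation nz z := {v | v != z}.

Notation tens k z := {ffun nz z -> (k : fieldType)^o}.

(* the linear extension of a pointed map f : V -> W: e_v |-> e_{f v} if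
   f v <> 0, and 0 otherwise *)
Definition tmap (k : fieldType) (V W : finType) (zV : V) (zW : W)
  (f : V -> W) (x : tens k zV) : tens k zW :=
  [ffun w : nz zW => \sum_(v : nz zV | f (val v) == val w) x v].
Arguments tmap {k V W} zV zW f x.

(* Main.v *)
Require Import Defs.
From HB Require Import structures.
From mathcomp Require Import all_boot all_order all_fingroup all_algebra.
Import GRing.Theory.
Local Open Scope ring_scope.

Lemma tmap_lin (k : fieldType) (V W : finType) (zV : V) (zW : W) (f : V -> W)
  (c : k) (x y : tens k zV) :
  tmap zV zW f (c *: x + y) = c *: tmap zV zW f x + tmap zV zW f y.
Proof.
apply/ffunP => w; rewrite !ffunE scaler_sumr -big_split /=.
by apply: eq_bigr => v _; rewrite !ffunE.
Qed.

Lemma tmap_id (k : fieldType) (V : finType) (z : V) (f : V -> V)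
  (x : tens k z) : (forall v, f v = v) -> tmap z z f x = x.
Proof.
move=> Hf; apply/ffunP => w; rewrite ffunE (big_pred1 w) // => v /=.
by rewrite Hf.
Qed.

Lemma tmap_comp (k : fieldType) (U V W : finType) (zU : U) (zV : V) (zW : W)
  (f : U -> V) (g : V -> W) (x : tens k zU) :
  f zU = zV -> g zV = zW ->
  tmap zV zW g (tmap zU zV f x) = tmap zU zW (fun u => g (f u)) x.
Proof.
move=> fz gz; apply/ffunP => w; rewrite !ffunE.
have wz : sval w != zW := valP w.
under eq_bigr do rewrite ffunE.
under eq_bigr do rewrite big_mkcond.
rewrite exchange_big /= [RHS]big_mkcond; apply: eq_bigr => u _ /=.
have [fu|fu] := eqVneq (f (val u)) zV.
  rewrite big1; last first.
    by move=> v /eqP gv; case: ifP => // /eqP fv;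
      move: wz; rewrite -gv -fv fu gz eqxx.
  by rewrite fu gz; case: eqP => // e; move: wz; rewrite -e eqxx.
case: eqP => gw.
  rewrite (bigD1 (exist (fun v => v != zV) _ fu)) /= ?gw ?eqxx // big1 ?addr0 // => v /andP[_ nv].
  by case: ifP => // /eqP fv; move: nv; rewrite -val_eqE /= fv eqxx.
apply: big1 => v /eqP gv; case: ifP => // /eqP fv.
by exfalso; apply: gw; rewrite fv.
Qed.

Lemma tmap_sum (k : fieldType) (V : finType) (z : V) (I : finType)
  (EI : {set I}) (F : V -> V) (Fe : I -> V -> V) (x : tens k z) :
  (forall v, v != z ->
     (exists2 e0, e0 \in EI & Fe e0 v = F v /\ forall e, e \in EI -> e != e0 -> Fe e v = z)
     \/ (F v = z /\ forall e, e \in EI -> Fe e v = z)) ->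
  tmap z z F x = \sum_(e in EI) tmap z z (Fe e) x.
Proof.
move=> H; apply/ffunP => w; rewrite sum_ffunE ffunE.
under [RHS]eq_bigr do rewrite ffunE big_mkcond.
rewrite exchange_big big_mkcond /=; apply: eq_bigr => v _.
have wz : sval w != z := valP w.
case: (H (val v) (valP v)) => [[e0 e0E [He0 Ho]]|[Fz Ho]].
  rewrite (bigD1 e0) //= He0 big1 ?addr0 // => e /andP[eE ne].
  by rewrite Ho //; case: eqP => // e'; move: wz; rewrite -e' eqxx.
rewrite big1; first by rewrite Fz; case: eqP => // e'; move: wz; rewrite -e' eqxx.
by move=> e eE; rewrite Ho //; case: eqP => // e'; move: wz; rewrite -e' eqxx.
Qed.

Lemma idem_unique (gT : finGroupType) (M : finType) (mul : M -> M -> M) (one zero : M)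
  (iota : gT -> M) (HM : hatG_linear_monoid mul one zero iota) (le : rel M)
  (V : finType) (z : V) (act : M -> V -> V)
  (H : repM_obj mul one zero iota le z act) (E : {set M})
  (HE : complete_orth_idem mul one zero le E) (v : V) (vz : v != z) :
  exists2 e0, e0 \in E & act e0 v = v /\ forall e, e \in E -> e != e0 -> act e v = z.
Proof.
case: H => [[HG act1 actM act0 Hmor] Hj].
case: HE => [Horth HjE].
case: (Hj E one HjE) => [_ Hle1 Hleast].
have act_z a : act a z = z by case: (Hmor a).
case: HM => _ _ [iota1 iotaM _] _ _.
have Hev e : e \in E -> act e v != z -> act e v = v.
  by move=> eE ne; have := Hle1 e eE v ne; rewrite act1 => <-.
have [ex|nex] := boolP [exists e, (e \in E) && (act e v == v)].
  case/existsP: ex => e0 /andP[e0E /eqP He0]; exists e0 => //; split => // e eE ne.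
  apply/eqP; apply: contraT => nz.
  have He := Hev e eE nz.
  have := Horth e e0 eE e0E; rewrite (negbTE ne) => Hm.
  have : act (mul e e0) v = z by rewrite Hm act0.
  by rewrite actM He0 He => vz'; rewrite vz' eqxx in vz.
exfalso.
have allz e : e \in E -> act e v = z.
  move=> eE; apply/eqP; apply: contraT => nz.
  have : [exists e, (e \in E) && (act e v == v)].
    by apply/existsP; exists e; rewrite eE /= Hev.
  by rewrite (negbTE nex).
pose orb x := [exists g, x == act (iota g) v].
pose B x := if orb x then z else x.
have orbG g x : orb (act (iota g) x) = orb x.
  apply/existsP/existsP => [[h /eqP Hh]|[h /eqP Hh]].
    exists (g^-1 * h)%g; apply/eqP.
    have : act (iota (g^-1)%g) (act (iota g) x) = x by rewrite -actM -iotaM mulVg iota1 act1.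
    by rewrite Hh -actM -iotaM => <-.
  by exists (g * h)%g; rewrite Hh iotaM actM.
have HB : vectG_mor z z (fun g => act (iota g)) (fun g => act (iota g)) B.
  split.
  - by rewrite /B; case: ifP.
  - by move=> g x; rewrite /B orbG; case: ifP => _ //; rewrite act_z.
  - move=> v1 v2; rewrite /B; case: ifP => _; first by move=> _; rewrite eqxx.
    case: ifP => _; first by move=> ->; rewrite eqxx.
    by move=> -> _; exists 1%g; rewrite iota1 act1.
have := Hleast B HB.
have Hle : forall a, a \in E -> endle z (act a) B.
  move=> a aE x nx; have Hx := Hle1 a aE x nx; rewrite act1 in Hx.
  rewrite /B; case: ifP => [/existsP[g /eqP Hg]|_]; last by [].
  exfalso; move: nx; rewrite Hg.
  by case: (Hmor a) => _ -> _; rewrite allz // act_z eqxx.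
move=> /(_ Hle v); rewrite act1 => /(_ vz).
have : orb v by apply/existsP; exists 1%g; rewrite iota1 act1.
by rewrite /B => -> zv; rewrite zv eqxx in vz.
Qed.
Arguments idem_unique {gT M mul one zero iota} HM {le V z act} H {E} HE {v} vz.

Theorem mainTheorem16 (gT : finGroupType) (Gab : abelian [set: gT])
  (M : finType) (mul : M -> M -> M) (one zero : M) (iota : gT -> M)
  (HM : hatG_linear_monoid mul one zero iota)
  (le : rel M) (Hle : monoid_order mul zero le)
  (k : fieldType) :
  (* on objects: V (x) k is a k[M]-module killed by the defining relations
     of k[\mathcal M], i.e. a k[\mathcal M]-module *)
  (forall (V : finType) (z : V) (act : M -> V -> V),
     repM_obj mul one zero iota le z act ->
     [/\ forall a (c : k) (x y : tens k z),
           tmap z z (act a) (c *: x + y) = c *: tmap z z (act a) x + tmap z z (act a) y,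
         forall x : tens k z, tmap z z (act one) x = x,
         forall a b (x : tens k z),
           tmap z z (act (mul a b)) x = tmap z z (act a) (tmap z z (act b) x)
       & forall a (E : {set M}), complete_orth_idem mul one zero le E ->
           forall x : tens k z,
             tmap z z (act a) x = \sum_(e in E) tmap z z (act (mul a e)) x /\
             tmap z z (act a) x = \sum_(e in E) tmap z z (act (mul e a)) x])
  /\
  (* on morphisms: f (x) k is a module homomorphism *)
  (forall (V W : finType) (zV : V) (zW : W) (actV : M -> V -> V)
          (actW : M -> W -> W) (f : V -> W),
     repM_obj mul one zero iota le zV actV ->
     repM_obj mul one zero iota le zW actW ->
     rep_mor iota zV zW actV actW f ->
     [/\ forall (c : k) (x y : tens k zV),
           tmap zV zW f (c *: x + y) = c *: tmap zV zW f x + tmap zV zW f y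
       & forall a (x : tens k zV),
           tmap zV zW f (tmap zV zV (actV a) x) = tmap zW zW (actW a) (tmap zV zW f x)]).
Proof.
split.
  move=> V z act Hrep; have Hrep' := Hrep.
  case: Hrep => [[HG act1 actM act0 Hmor] Hj].
  have act_z a : act a z = z by case: (Hmor a).
  split.
  - by move=> a c x y; apply: tmap_lin.
  - by move=> x; apply: tmap_id.
  - move=> a b x; rewrite tmap_comp ?act_z //.
    by rewrite /tmap; apply/ffunP => w; rewrite !ffunE; apply: eq_bigl => v; rewrite actM.
  - move=> a E HE x; split; apply: tmap_sum => v vz.
      have [e0 e0E [He0 Ho]] := idem_unique HM Hrep' HE vz.
      left; exists e0 => //; split; first by rewrite actM He0.
      by move=> e eE ne; rewrite actM Ho ?act_z.
    have [w0|wn] := eqVneq (act a v) z.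
      by right; split => // e eE; rewrite actM w0 act_z.
    have [e1 e1E [He1 Ho1]] := idem_unique HM Hrep' HE wn.
    left; exists e1 => //; split; first by rewrite actM He1.
    by move=> e eE ne; rewrite actM Ho1.
move=> V W zV zW actV actW f HV HW [[fz fG finj] fact].
have actVz a : actV a zV = zV by case: HV => [[_ _ _ _ Hm] _]; case: (Hm a).
have actWz a : actW a zW = zW by case: HW => [[_ _ _ _ Hm] _]; case: (Hm a).
split; first by move=> c x y; apply: tmap_lin.
move=> a x; rewrite !tmap_comp //.
by rewrite /tmap; apply/ffunP => w; rewrite !ffunE; apply: eq_bigl => v; rewrite fact.
Qed.
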